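(* Let $\Sigma=\{\mathtt{a},\mathtt{b},\mathtt{c}\}$. Define $F_0=\mathtt{a}$, $F_1=\mathtt{ab}$, and $F_i=F_{i-1}\cdot F_{i-2}$ for $i\ge 2$. Then the language $L_{\mathsf{fib}}=\{\mathtt{c}F_0\mathtt{c}F_1\mathtt{c}\cdots\mathtt{c}F_n\mathtt{c} : n\in\mathbb{N}\}$ belongs to $\mathcal{L}(\mathsf{FC})$.
   Context: For $w \in \Sigma^*$, $\mathsf{Facs}(w)$ is the set of all factors of $w$. The structure $\mathfrak{A}_w$ representing $w$ has universe $\mathsf{Facs}(w)\cup\{\perp\}$, a ternary relation $R_\circ=\{(x,y,z)\in\mathsf{Facs}(w)^3 : x=y\cdot z\}$, for each letter a constant interpreted as that letter if it occurs in $w$ and as $\perp$ otherwise, and a constant $\varepsilon$ interpreted as the empty word. $\mathsf{FC}$ is first-order logic over such structures, with atomic formulas $(x \mathbin{\dot=} y\cdot z)$ (meaning $R_\circ(x,y,z)$) where $x,y,z$ are variables, letters of $\Sigma$, or $\varepsilon$, closed under $\land,\lor,\neg,\exists,\forall$; quantified variables range over $\mathsf{Facs}(w)$. For a sentence $\varphi$, $\mathcal{L}(\varphi)=\{w\in\Sigma^*:\mathfrak{A}_w\models\varphi\}$, and $\mathcal{L}(\mathsf{FC})$ is the class of all such languages. *)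

(* Defs.v *)
From HB Require Import structures.
From mathcomp Require Import all_boot.
Set Implicit Arguments. Unset Strict Implicit. Unset Printing Implicit Defensive.

Inductive letter := La | Lb | Lc.

Definition letter_eqb (x y : letter) : bool :=
  match x, y with
  | La, La | Lb, Lb | Lc, Lc => true
  | _, _ => false
  end.
Lemma letter_eqP : Equality.axiom letter_eqb.
Proof. by case; case; constructor. Qed.
HB.instance Definition _ := hasDecEq.Build letter letter_eqP.

Definition word := seq letter.

Definition is_factor (u w : word) : bool := infix u w.

Inductive fc_term := TVar of nat | TLet of letter | TEps.

Inductive fc_formula :=
| FCat of fc_term & fc_term & fc_term   (* (x =. y . z) *)
| FAnd of fc_formula & fc_formula
| FOr  of fc_formula & fc_formula
| FNot of fc_formula
| FEx  of nat & fc_formula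
| FAll of nat & fc_formula.

Definition term_fv (t : fc_term) : seq nat :=
  if t is TVar n then [:: n] else [::].

Fixpoint fv (f : fc_formula) : seq nat :=
  match f with
  | FCat x y z => term_fv x ++ term_fv y ++ term_fv z
  | FAnd f g | FOr f g => fv f ++ fv g
  | FNot f => fv f
  | FEx n f | FAll n f => filter (fun m => m != n) (fv f)
  end.

Definition sentence (f : fc_formula) : Prop := fv f = [::].

(* Elements of the universe Facs(w) ∪ {⊥}: None is ⊥. *)
Definition valuation := nat -> word.

Definition upd (s : valuation) (n : nat) (u : word) : valuation :=
  fun m => if m == n then u else s m.

Definition eval_term (w : word) (s : valuation) (t : fc_term) : option word :=
  match t with
  | TVar n => Some (s n)
  | TLet a => if a \in w then Some [:: a] else None
  | TEps => Some [::]
  end.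

Definition R_cat (w x y z : word) : Prop :=
  [/\ is_factor x w, is_factor y w, is_factor z w & x = y ++ z].

Fixpoint sat (w : word) (s : valuation) (f : fc_formula) : Prop :=
  match f with
  | FCat x y z =>
      match eval_term w s x, eval_term w s y, eval_term w s z with
      | Some u, Some v, Some r => R_cat w u v r
      | _, _, _ => False
      end
  | FAnd f g => sat w s f /\ sat w s g
  | FOr f g => sat w s f \/ sat w s g
  | FNot f => ~ sat w s f
  | FEx n f => exists u, is_factor u w /\ sat w (upd s n u) f
  | FAll n f => forall u, is_factor u w -> sat w (upd s n u) f
  end.

(* For a sentence the valuation is irrelevant; we use the one sending
   every variable to epsilon (which is a factor of every w). *)
Definition models (w : word) (f : fc_formula) : Prop := sat w (fun _ => [::]) f.

Definition lang_of (f : fc_formula) : word -> Prop := fun w => models w f.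

Definition in_L_FC (L : word -> Prop) : Prop :=
  exists f, sentence f /\ forall w, L w <-> lang_of f w.

Fixpoint fib_pair (n : nat) : word * word :=
  (* returns (F_n, F_{n+1}) *)
  match n with
  | 0 => ([:: La], [:: La; Lb])
  | n'.+1 => let: (p, q) := fib_pair n' in (q, q ++ p)
  end.
Definition fib (n : nat) : word := (fib_pair n).1.

Definition fib_block (n : nat) : word :=
  Lc :: flatten [seq fib i ++ [:: Lc] | i <- iota 0 n.+1].

Definition L_fib (w : word) : Prop := exists n : nat, w = fib_block n.

Lemma fib_rec n : fib n.+2 = fib n.+1 ++ fib n.
Proof. rewrite /fib /=; by case: (fib_pair n). Qed.
Lemma fib0 : fib 0 = [:: La]. Proof. by []. Qed.
Lemma fib1 : fib 1 = [:: La; Lb]. Proof. by []. Qed.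

(* Main.v *)
Require Import Defs.
From Stdlib Require Import Setoid Morphisms Classical.
From mathcomp Require Import all_boot zify.
From Stdlib Require Import Lia.
Set Implicit Arguments. Unset Strict Implicit. Unset Printing Implicit Defensive.

Lemma fact_cat x y w : is_factor (x ++ y) w -> is_factor x w /\ is_factor y w.
Proof. move=> H; split; [exact: catr_infix H | exact: catl_infix H]. Qed.

Lemma fact_let a w : is_factor [:: a] w = (a \in w).
Proof. exact: infix1s. Qed.

Lemma fact_nil w : is_factor [::] w. Proof. exact: infix0s. Qed.

Lemma sat_VLV w s i a j : sat w s (FCat (TVar i) (TLet a) (TVar j)) <->
  is_factor (s i) w /\ s i = a :: s j.
Proof.
rewrite /=; case: ifP => Ha /=; rewrite /R_cat.
  split => [[F1 _ _ E]|[H E]]; first by split.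
  have H' := H; rewrite E in H'; split => //.
  - by rewrite fact_let.
  - exact: (catl_infix (s:=[:: a]) H').
split => // -[H E]; rewrite E in H.
by move: (mem_infix H (mem_head a _)); rewrite Ha.
Qed.

Lemma sat_VVL w s i j a : sat w s (FCat (TVar i) (TVar j) (TLet a)) <->
  is_factor (s i) w /\ s i = s j ++ [:: a].
Proof.
rewrite /=; case: ifP => Ha /=; rewrite /R_cat.
  split => [[F1 _ _ E]|[H E]]; first by split.
  have H' := H; rewrite E in H'; split => //.
  - exact: (catr_infix H').
  - by rewrite fact_let.
split => // -[H E]; rewrite E in H.
have : a \in s j ++ [:: a] by rewrite mem_cat mem_seq1 eqxx orbT.
by move/(mem_infix H); rewrite Ha.
Qed.

Lemma sat_VVV w s i j k : sat w s (FCat (TVar i) (TVar j) (TVar k)) <->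
  is_factor (s i) w /\ s i = s j ++ s k.
Proof.
rewrite /= /R_cat; split => [[F1 _ _ E]|[H E]]; first by split.
have H' := H; rewrite E in H'; split => //.
- exact: (catr_infix H').
- exact: (catl_infix H').
Qed.

Lemma sat_VEE w s i : sat w s (FCat (TVar i) TEps TEps) <-> s i = [::].
Proof.
rewrite /= /R_cat; split => [[? ? ? ->]|E] //; split => //; rewrite ?E; exact: fact_nil.
Qed.

Lemma upd_eq s n u : upd s n u n = u. Proof. by rewrite /upd eqxx. Qed.
Lemma upd_ne s n u m : m != n -> upd s n u m = s m. Proof. by rewrite /upd => /negbTE ->. Qed.


Lemma satE_ex w s n f : sat w s (FEx n f) <-> exists u, is_factor u w /\ sat w (upd s n u) f.
Proof. by []. Qed.
Lemma satE_all w s n f : sat w s (FAll n f) <-> forall u, is_factor u w -> sat w (upd s n u) f.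
Proof. by []. Qed.
Lemma satE_and w s f g : sat w s (FAnd f g) <-> sat w s f /\ sat w s g.
Proof. by []. Qed.
Lemma satE_or w s f g : sat w s (FOr f g) <-> sat w s f \/ sat w s g.
Proof. by []. Qed.
Lemma satE_not w s f : sat w s (FNot f) <-> ~ sat w s f.
Proof. by []. Qed.

Ltac satsimp := repeat (setoid_rewrite satE_ex ||
  setoid_rewrite satE_and || setoid_rewrite satE_or || setoid_rewrite satE_not);
  repeat (setoid_rewrite sat_VLV || setoid_rewrite sat_VVL || setoid_rewrite sat_VVV
          || setoid_rewrite sat_VEE); rewrite /upd /=.

Lemma fact_tl a y w : is_factor (a :: y) w -> is_factor y w.
Proof. exact: (catl_infix (s:=[:: a])). Qed.

Definition ne l := FAnd (FNot (FCat (TVar 1) (TLet l) (TVar 0)))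
                        (FNot (FCat (TVar 1) (TVar 0) (TLet l))).
Definition whole_f := FAll 1 (FAnd (ne La) (FAnd (ne Lb) (ne Lc))).

Lemma sat_whole w s : is_factor (s 0) w -> (sat w s whole_f <-> s 0 = w).
Proof.
move=> F; rewrite /whole_f /ne.
setoid_rewrite satE_all; satsimp.
split; last first.
  move=> E u _; rewrite E.
  have nl : forall l, ~ (is_factor u w /\ u = l :: w).
    by move=> l [H Eu]; move: (size_infix H); rewrite Eu /= ltnn.
  have nr : forall l, ~ (is_factor u w /\ u = w ++ [:: l]).
    by move=> l [H Eu]; move: (size_infix H); rewrite Eu size_cat addn1 ltnn.
  by do !split; (apply: nl || apply: nr).
move=> H; case/infixP: F => p [q Ew].
have nl : forall l, is_factor (l :: s 0) w -> False.
  move=> l Fl; have := H _ Fl; case: l Fl => Fl; tauto.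
have nr : forall l, is_factor (s 0 ++ [:: l]) w -> False.
  move=> l Fl; have := H _ Fl; case: l Fl => Fl; tauto.
case/lastP: p Ew => [|p l] Ew.
  case: q Ew => [|l q] Ew; first by rewrite Ew cats0.
  exfalso; apply: (nr l); rewrite Ew /=; apply/infixP; exists [::], q.
  by rewrite -catA.
exfalso; apply: (nl l); rewrite Ew; apply/infixP; exists p, q.
by rewrite -cats1 -catA.
Qed.

Definition A_f := FEx 1 (FEx 2 (FEx 3 (FAnd (FCat (TVar 0) (TLet Lc) (TVar 1))
  (FAnd (FCat (TVar 1) (TLet La) (TVar 2)) (FAnd (FCat (TVar 2) (TLet Lc) (TVar 3))
  (FOr (FCat (TVar 3) TEps TEps) (FEx 4 (FEx 5 (FEx 6 (FAnd (FCat (TVar 3) (TLet La) (TVar 4))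
  (FAnd (FCat (TVar 4) (TLet Lb) (TVar 5)) (FCat (TVar 5) (TLet Lc) (TVar 6))))))))))))).

Lemma sat_A w s : sat w s A_f <-> is_factor (s 0) w /\
  (s 0 = [:: Lc; La; Lc] \/ exists r, s 0 = [:: Lc; La; Lc; La; Lb; Lc] ++ r).
Proof.
rewrite /A_f; satsimp; split.
  move=> [u1 [_ [u2 [_ [u3 [_ [[F0 E0] [[_ E1] [[_ E2] H]]]]]]]]].
  split => //; rewrite E0 E1 E2; case: H => [->|]; first by left.
  move=> [u4 [_ [u5 [_ [u6 [_ [[_ E4] [[_ E5] [_ E6]]]]]]]]].
  by right; exists u6; rewrite E4 E5 E6.
move=> [F0 H].
case: H => [E|[r E]]; rewrite E in F0 *.
  have F1 := fact_tl F0; have F2 := fact_tl F1; have F3 := fact_tl F2.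
  exists [:: La; Lc]; split=>//; exists [:: Lc]; split=>//; exists [::]; split=>//.
  by do !split => //; left.
have F1 := fact_tl F0; have F2 := fact_tl F1; have F3 := fact_tl F2.
have F4 := fact_tl F3; have F5 := fact_tl F4; have F6 := fact_tl F5.
exists [:: La, Lc, La, Lb, Lc & r]; split=>//; exists [:: Lc, La, Lb, Lc & r]; split=>//.
exists [:: La, Lb, Lc & r]; split=>//; do !split => //; right.
by exists [:: Lb, Lc & r]; split=>//; exists [:: Lc & r]; split=>//; exists r.
Qed.

Definition B_f := FEx 1 (FCat (TVar 0) (TVar 1) (TLet Lc)).
Lemma sat_B w s : sat w s B_f <-> is_factor (s 0) w /\ exists p, s 0 = p ++ [:: Lc].
Proof.
rewrite /B_f; satsimp; split; first by move=> [p [_ [F E]]]; split=>//; exists p.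
move=> [F [p E]]; exists p; split => //.
by rewrite E in F; exact: catr_infix F.
Qed.


Lemma in_split (x : letter) (u : word) : x \in u -> exists p q, u = p ++ x :: q.
Proof. by case/splitPr => p q; exists p, q. Qed.

Definition cf i := FNot (FEx 7 (FEx 8 (FEx 9 (FAnd (FCat (TVar i) (TVar 7) (TVar 8))
                                          (FCat (TVar 8) (TLet Lc) (TVar 9)))))).

Lemma sat_cf w s i : i \in [:: 1; 2; 3] ->
  (sat w s (cf i) <-> (is_factor (s i) w -> Lc \notin s i)).
Proof.
rewrite !inE => /or3P [] /eqP -> ; rewrite /cf; satsimp; (split;
  [ move=> H F; apply/negP => /in_split [p [q E]]; rewrite E in F; apply: H;
    have Fp : is_factor p w := catr_infix (s := Lc :: q) F;
    have Fcq : is_factor (Lc :: q) w := catl_infix F;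
    have Fq := fact_tl Fcq;
    by exists p; split => //; exists (Lc :: q); split => //; exists q; rewrite E
  | move=> H [p [_ [m [_ [q [_ [[F E1] [_ E2]]]]]]]];
    by move: (H F); rewrite E1 E2 mem_cat inE eqxx orbT ]).
Qed.

Definition fac := FEx 10 (FEx 11 (FEx 12 (FEx 13 (FEx 14 (FEx 15
  (FAnd (FCat (TVar 10) (TLet Lc) (TVar 11)) (FAnd (FCat (TVar 11) (TVar 1) (TVar 12))
  (FAnd (FCat (TVar 12) (TLet Lc) (TVar 13)) (FAnd (FCat (TVar 13) (TVar 2) (TVar 14))
  (FAnd (FCat (TVar 14) (TLet Lc) (TVar 15)) (FCat (TVar 15) (TVar 3) (TLet Lc)))))))))))).

Lemma sat_fac w s : sat w s fac <->
  is_factor (Lc :: s 1 ++ Lc :: s 2 ++ Lc :: s 3 ++ [:: Lc]) w.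
Proof.
rewrite /fac; satsimp; split.
  move=> [t10 [_ [t11 [_ [t12 [_ [t13 [_ [t14 [_ [t15 [_
          [[F E10] [[_ E11] [[_ E12] [[_ E13] [[_ E14] [_ E15]]]]]]]]]]]]]]]]]].
  by rewrite E10 E11 E12 E13 E14 E15 in F.
move=> F0.
have F1 := fact_tl F0.
have F2 := catl_infix F1.
have F3 := fact_tl F2.
have F4 := catl_infix F3.
have F5 := fact_tl F4.
exists (Lc :: s 1 ++ Lc :: s 2 ++ Lc :: s 3 ++ [:: Lc]); split => //.
exists (s 1 ++ Lc :: s 2 ++ Lc :: s 3 ++ [:: Lc]); split => //.
exists (Lc :: s 2 ++ Lc :: s 3 ++ [:: Lc]); split => //.
exists (s 2 ++ Lc :: s 3 ++ [:: Lc]); split => //.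
exists (Lc :: s 3 ++ [:: Lc]); split => //.
exists (s 3 ++ [:: Lc]); split => //.
Qed.

Definition C_f := FAll 1 (FAll 2 (FAll 3 (FOr (FNot (FAnd (cf 1) (FAnd (cf 2) (FAnd (cf 3) fac))))
  (FCat (TVar 3) (TVar 2) (TVar 1))))).

Definition C_sem (w : word) := forall x y z : word, Lc \notin x -> Lc \notin y -> Lc \notin z ->
  is_factor (Lc :: x ++ Lc :: y ++ Lc :: z ++ [:: Lc]) w -> z = y ++ x.

Lemma sat_C w s : sat w s C_f <-> C_sem w.
Proof.
rewrite /C_f /C_sem; split.
  move=> H x y z cx cy cz F.
  have Fx : is_factor x w by exact: (catr_infix (catl_infix (s := [:: Lc]) F)).
  have F' := catl_infix (catl_infix (s := [:: Lc]) F).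
  have Fy : is_factor y w by exact: (catr_infix (catl_infix (s := [:: Lc]) F')).
  have F'' := catl_infix (catl_infix (s := [:: Lc]) F').
  have Fz : is_factor z w by exact: (catr_infix (catl_infix (s := [:: Lc]) F'')).
  have : sat w (upd (upd (upd s 1 x) 2 y) 3 z) (FOr (FNot (FAnd (cf 1) (FAnd (cf 2) (FAnd (cf 3) fac)))) (FCat (TVar 3) (TVar 2) (TVar 1))) := H x Fx y Fy z Fz.
  rewrite satE_or satE_not !satE_and.
  rewrite !sat_cf ?inE // sat_fac sat_VVV /upd /=.
  by case=> [[]|[]//]; do !split => //.
move=> H x Fx y Fy z Fz.
change (sat w (upd (upd (upd s 1 x) 2 y) 3 z) (FOr (FNot (FAnd (cf 1) (FAnd (cf 2) (FAnd (cf 3) fac)))) (FCat (TVar 3) (TVar 2) (TVar 1)))).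
rewrite satE_or satE_not !satE_and.
rewrite !sat_cf ?inE // sat_fac sat_VVV /upd /=.
case: (classic ((is_factor x w -> Lc \notin x) /\ (is_factor y w -> Lc \notin y) /\
   (is_factor z w -> Lc \notin z) /\ is_factor (Lc :: x ++ Lc :: y ++ Lc :: z ++ [:: Lc]) w)).
  move=> [hx [hy [hz F]]]; right; split => //.
  exact: H (hx Fx) (hy Fy) (hz Fz) F.
by left.
Qed.

Definition phi := FEx 0 (FAnd whole_f (FAnd A_f (FAnd B_f C_f))).

Definition S_sem (w : word) := (w = [:: Lc; La; Lc] \/ exists r, w = [:: Lc; La; Lc; La; Lb; Lc] ++ r)
  /\ (exists p, w = p ++ [:: Lc]) /\ C_sem w.

Lemma phi_sentence : sentence phi.
Proof. by []. Qed.

Lemma models_phi w : models w phi <-> S_sem w.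
Proof.
rewrite /models /phi satE_ex /S_sem; split.
  move=> [W [FW]].
  have FW' : is_factor (upd (fun _ => [::]) 0 W 0) w by rewrite /upd.
  rewrite !satE_and sat_A sat_B sat_C (sat_whole FW') /upd /=.
  by move=> [<- [[_ HA] [[_ HB] HC]]].
move=> [HA [HB HC]]; exists w; split; first exact: infix_refl.
have FW' : is_factor (upd (fun _ => [::]) 0 w 0) w by rewrite /upd /=; exact: infix_refl.
rewrite !satE_and sat_A sat_B sat_C (sat_whole FW') /upd /=.
by do !split => //; exact: infix_refl.
Qed.

Definition enc (bs : seq word) : word := flatten [seq b ++ [:: Lc] | b <- bs].

Lemma enc_cons b bs : enc (b :: bs) = b ++ Lc :: enc bs.
Proof. by rewrite /enc /= -catA. Qed.

Lemma enc_cat b1 b2 : enc (b1 ++ b2) = enc b1 ++ enc b2.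
Proof. by rewrite /enc map_cat flatten_cat. Qed.

Lemma cut b u r t : Lc \notin b -> b ++ Lc :: r = u ++ Lc :: t ->
  exists m, u = b ++ m /\ Lc :: r = m ++ Lc :: t.
Proof.
elim: b u => [|x b IH] u /=; first by move=> _ E; exists u.
rewrite inE negb_or => /andP [hx hb]; case: u => [|y u] /=.
  by case=> E; rewrite E eqxx in hx.
case=> -> E; have [m [-> E']] := IH u hb E; by exists m.
Qed.

Lemma cut_eq b u r t : Lc \notin b -> Lc \notin u -> b ++ Lc :: r = u ++ Lc :: t ->
  b = u /\ r = t.
Proof.
move=> hb hu E; have [m [Eu E']] := cut hb E.
case: m Eu E' => [|y m] Eu /=; first by rewrite cats0 in Eu; case=> ->.
case=> Ey _; by move: hu; rewrite Eu mem_cat inE Ey eqxx orbT.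
Qed.

Lemma enc_prefix us bs q : all (fun b => Lc \notin b) bs -> all (fun b => Lc \notin b) us ->
  enc bs = enc us ++ q -> exists bs', bs = us ++ bs'.
Proof.
elim: us bs => [|u us IH] bs hbs hus; first by exists bs.
case: bs hbs => [|b bs] /= hbs; rewrite !enc_cons.
  by move: hus => _; rewrite /enc /=; case: u.
move/andP: hbs => [hb hbs]; move/andP: hus => [hu hus].
rewrite -catA /= => E; have [-> E'] := cut_eq hb hu E.
have [bs' ->] := IH bs hbs hus E'; by exists bs'.
Qed.

Lemma enc_infix bs p us q : all (fun b => Lc \notin b) bs -> all (fun b => Lc \notin b) us ->
  Lc :: enc bs = p ++ Lc :: enc us ++ q -> exists pre post, bs = pre ++ us ++ post.
Proof.
move=> hbs hus.
elim: bs p hbs => [|b bs IH] [|y p] hbs /=.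
- case=> E; have [bs' E'] := enc_prefix hbs hus E; by exists [::], bs'.
- by case=> _; case: p.
- case=> E; have [bs' E'] := enc_prefix hbs hus E; by exists [::], bs'.
- move/andP: hbs => [hb hbs]; case=> _; rewrite enc_cons => E.
  have [m [_ E']] := cut hb E.
  have [pre [post ->]] := IH m hbs E'; by exists (b :: pre), post.
Qed.

Lemma decomp r : exists bs l, [/\ all (fun b => Lc \notin b) bs, Lc \notin l & r = enc bs ++ l].
Proof.
elim: r => [|x r [bs [l [hbs hl E]]]]; first by exists [::], [::].
case: (eqVneq x Lc) => [->|hx].
  by exists ([::] :: bs), l; rewrite E /= hbs.
case: bs hbs E => [|b bs] hbs E.
  by exists [::], (x :: l); rewrite E /= inE negb_or eq_sym hx hl.
exists ((x :: b) :: bs), l; split => //.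
  by move: hbs; rewrite /= inE negb_or eq_sym hx.
by rewrite E !enc_cons.
Qed.

Lemma enc_last bs : exists p, Lc :: enc bs = p ++ [:: Lc].
Proof.
elim: bs => [|b bs [p E]]; first by exists [::].
by exists (Lc :: b ++ p); rewrite enc_cons /= E catA.
Qed.

Lemma fib_pair_cfree n : Lc \notin (fib_pair n).1 /\ Lc \notin (fib_pair n).2.
Proof.
elim: n => [|n IH] //=; case: (fib_pair n) IH => p q /= [hp hq]; split => //.
by rewrite mem_cat negb_or hq hp.
Qed.

Lemma fib_cfree i : Lc \notin fib i. Proof. exact: (fib_pair_cfree i).1. Qed.

Lemma fib_block_enc n : fib_block n = Lc :: enc [seq fib i | i <- iota 0 n.+1].
Proof. by rewrite /fib_block /enc -map_comp. Qed.

Lemma all_fib m n : all (fun b => Lc \notin b) [seq fib i | i <- iota m n].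
Proof. by apply/allP => b /mapP [i _ ->]; exact: fib_cfree. Qed.

Lemma L_to_S w : L_fib w -> S_sem w.
Proof.
move=> [n ->]; rewrite /S_sem; split; [|split].
- case: n => [|n]; [by left | right].
  by exists (enc [seq fib i | i <- iota 2 n]); rewrite fib_block_enc.
- by rewrite fib_block_enc; exact: enc_last.
- move=> x y z cx cy cz /infixP [p [q E]].
  have E' : Lc :: enc [seq fib i | i <- iota 0 n.+1] = p ++ Lc :: enc [:: x; y; z] ++ q.
    by rewrite -fib_block_enc E !enc_cons /enc /= -!catA.
  have hus : all (fun b => Lc \notin b) [:: x; y; z] by rewrite /= cx cy cz.
  have [pre [post Eb]] := enc_infix (all_fib 0 n.+1) hus E'.
  have Hs : size pre + 2 < n.+1.
    by have := congr1 size Eb; rewrite size_map size_iota size_cat /= => ->; lia.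
  have nb k : k < n.+1 -> nth [::] [seq fib i | i <- iota 0 n.+1] k = fib k.
    by move=> hk; rewrite (nth_map 0) ?size_iota // nth_iota.
  have hx := nb (size pre) ltac:(lia).
  have hy := nb (size pre).+1 ltac:(lia).
  have hz := nb (size pre).+2 ltac:(lia).
  rewrite Eb nth_cat ltnn subnn /= in hx.
  rewrite Eb nth_cat ltnNge leqnSn /= subSnn /= in hy.
  rewrite Eb nth_cat ltnNge (leq_trans (leqnSn _) (leqnSn _)) /= subSn // subSnn /= in hz.
  by rewrite hx hy hz fib_rec.
Qed.

Lemma enc_nil bs : enc bs = [::] -> bs = [::].
Proof. by case: bs => // b bs; rewrite enc_cons; case: b. Qed.

Lemma S_to_L w : S_sem w -> L_fib w.
Proof.
move=> [HA [[p Ep] HC]].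
have [t Et] : exists t, w = Lc :: t by case: HA => [->|[r ->]]; eexists.
have [bs [l [hbs hl Et']]] := decomp t.
have l0 : l = [::].
  case/lastP: l hl Et' => [|l' x] // hl Et'.
  have : last Lc w = x by rewrite Et Et' /= last_cat last_rcons.
  rewrite Ep last_cat /= => Ex; move: hl; by rewrite -Ex mem_rcons inE eqxx.
rewrite l0 cats0 in Et'; rewrite Et' in Et; clear t Et' l l0 hl.
case: HA => [E|[r E]]; rewrite Et in E; case: E => E.
  have h1 : all (fun b => Lc \notin b) [:: [:: La]] by [].
  have [bs' Ebs] := enc_prefix (q := [::]) hbs h1 E.
  rewrite Ebs enc_cat in E; case: E => /enc_nil Hb'.
  by exists 0; rewrite Et Ebs Hb'.
have h2 : all (fun b => Lc \notin b) [:: [:: La]; [:: La; Lb]] by [].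
have [bs' Ebs] := enc_prefix hbs h2 E.
have Hn : forall k, (k < size bs -> nth [::] bs k = fib k) /\
                    (k.+1 < size bs -> nth [::] bs k.+1 = fib k.+1).
  elim=> [|k [IH1 IH2]]; first by rewrite Ebs.
  split => // hk.
  have hk1 : k.+1 < size bs := ltnW hk.
  have hk0 : k < size bs := ltnW hk1.
  have cf k' : k' < size bs -> Lc \notin nth [::] bs k'.
    by move=> h; apply: (allP hbs); exact: mem_nth.
  have Ed : drop k bs = nth [::] bs k :: nth [::] bs k.+1 :: nth [::] bs k.+2 :: drop k.+3 bs.
    rewrite (drop_nth [::]); last by [].
    rewrite (drop_nth [::]); last by [].
    by rewrite (drop_nth [::]); last by [].
  have [p' Ep'] := enc_last (take k bs).
  have HI := HC _ _ _ (cf k hk0) (cf k.+1 hk1) (cf k.+2 hk).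
  rewrite HI; last first.
    apply/infixP; exists p', (enc (drop k.+3 bs)).
    have Eb : enc bs = enc (take k bs) ++ enc (drop k bs) by rewrite -enc_cat cat_take_drop.
    rewrite Et Eb Ed -cat_cons Ep' !enc_cons /=.
    by do 6 (try rewrite -!catA /=).
  rewrite IH2 //.
  by rewrite IH1 ?fib_rec.
have Ebs_eq : bs = [seq fib i | i <- iota 0 (size bs)].
  apply: (@eq_from_nth _ [::]); first by rewrite size_map size_iota.
  move=> i hi; rewrite (nth_map 0) ?size_iota // nth_iota // add0n; exact: (Hn i).1 hi.
have sz : 1 < size bs by rewrite Ebs.
exists (size bs).-1; rewrite fib_block_enc prednK ?(ltnW sz) // -Ebs_eq.
exact: Et.
Qed.

Theorem proposition4p1 : in_L_FC L_fib.
Proof.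
exists phi; split; first exact: phi_sentence.
move=> w; rewrite /lang_of models_phi; split; [exact: L_to_S | exact: S_to_L].
Qed.
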